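(* Let $q$ be a prime power, $k\geq 1$, and let $f,f'$ be linear Latin hypercubes of order $q$ and dimension $k$. Suppose there is a function $R:\mathbb{F}_q^3\to\mathbb{F}_q$ such that for every rectangle $(a,b,c,d)$ both $f(a)=R(f(b),f(c),f(d))$ and $f'(a)=R(f'(b),f'(c),f'(d))$ hold, and suppose $f(x)=f'(x)$ for every $x=(x_1,\dots,x_k)\in\mathbb{F}_q^k$ having at most one nonzero coordinate. Then $f=f'$. (That is, a linear Latin hypercube is uniquely determined by its rectangle function and its values at the points with at most one nonzero coordinate.)
   Context: A Latin hypercube of order $q$ and dimension $k$ is a function $f:\mathbb{F}_q^k\to\mathbb{F}_q$ such that fixing any $k-1$ arguments gives a bijection in the remaining argument. It is linear if there are permutations $\alpha_0,\dots,\alpha_k$ of $\mathbb{F}_q$ with $\alpha_0(f(x_1,\dots,x_k))=\alpha_1(x_1)+\cdots+\alpha_k(x_k)$ for all $x$. For distinct $i,j$, a rectangle of directions $i$ and $j$ is a quadruple $(a,b,c,d)$ in $\mathbb{F}_q^k$ with $a_i=b_i$, $c_i=d_i$, $b_j=c_j$, $d_j=a_j$, and $a_l=b_l=c_l=d_l$ for $l\notin\{i,j\}$. For a linear Latin hypercube $f$ (with $k\ge 2$), the rectangle function $\mathrm{Rect}_f$ is the unique $R$ with $f(a)=R(f(b),f(c),f(d))$ for all rectangles. *)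

(* Defs.v *)
From mathcomp Require Import all_boot all_order all_fingroup all_algebra.
Set Implicit Arguments. Unset Strict Implicit. Unset Printing Implicit Defensive.
Import GRing.Theory.
Local Open Scope ring_scope.

Definition upd (F : finFieldType) (k : nat) (x : {ffun 'I_k -> F}) (i : 'I_k) (t : F)
  : {ffun 'I_k -> F} := [ffun l => if l == i then t else x l].

Definition latin_hypercube (F : finFieldType) (k : nat) (f : {ffun 'I_k -> F} -> F) : Prop :=
  forall (i : 'I_k) (x : {ffun 'I_k -> F}), bijective (fun t : F => f (upd x i t)).

Definition linear_hypercube (F : finFieldType) (k : nat) (f : {ffun 'I_k -> F} -> F) : Prop :=
  exists (alpha0 : {perm F}) (alpha : 'I_k -> {perm F}),
    forall x : {ffun 'I_k -> F}, alpha0 (f x) = \sum_(i < k) alpha i (x i).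

Definition linear_latin_hypercube (F : finFieldType) (k : nat) (f : {ffun 'I_k -> F} -> F)
  : Prop := latin_hypercube f /\ linear_hypercube f.

Definition is_rectangle (F : finFieldType) (k : nat) (i j : 'I_k)
  (a b c d : {ffun 'I_k -> F}) : Prop :=
  [/\ i != j, a i = b i /\ c i = d i, b j = c j /\ d j = a j &
      forall l : 'I_k, l != i -> l != j -> [/\ a l = b l, b l = c l & c l = d l]].

Definition is_rect (F : finFieldType) (k : nat) (a b c d : {ffun 'I_k -> F}) : Prop :=
  exists i j : 'I_k, is_rectangle i j a b c d.

Definition at_most_one_nonzero (F : finFieldType) (k : nat) (x : {ffun 'I_k -> F}) : Prop :=
  (#|[set i | x i != 0%R]| <= 1)%N.

(* Main.v *)
Require Import Defs.
From mathcomp Require Import all_boot all_order all_fingroup all_algebra.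

Import GRing.Theory.
Local Open Scope ring_scope.
Section Aux.
Variables (F : finFieldType) (k : nat).
Local Notation supp x := [set l : 'I_k | x l != (0%R:F)].

Lemma supp_upd_sub (x : {ffun 'I_k -> F}) i : supp (upd x i 0%R) \subset supp x.
Proof.
apply/subsetP => l; rewrite !inE /upd ffunE.
by case: (l == i); rewrite ?eqxx.
Qed.

Lemma supp_upd_lt (x : {ffun 'I_k -> F}) i : x i != 0 ->
  (#|supp (upd x i 0%R)| < #|supp x|)%N.
Proof.
move=> xi; apply: proper_card; rewrite properEneq supp_upd_sub andbT.
apply/eqP => E; have : i \in supp (upd x i 0%R) by rewrite E inE.
by rewrite inE /upd ffunE eqxx eqxx.
Qed.
End Aux.

Theorem lemma2 (F : finFieldType) (k : nat) (hk : (1 <= k)%N)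
  (f f' : {ffun 'I_k -> F} -> F)
  (hf : linear_latin_hypercube f) (hf' : linear_latin_hypercube f')
  (R : F -> F -> F -> F)
  (hR : forall a b c d : {ffun 'I_k -> F}, is_rect a b c d ->
          f a = R (f b) (f c) (f d) /\ f' a = R (f' b) (f' c) (f' d))
  (h1 : forall x : {ffun 'I_k -> F}, at_most_one_nonzero x -> f x = f' x) :
  forall x : {ffun 'I_k -> F}, f x = f' x.
Proof.
move=> x.
have: (#|[set l | x l != 0%R]| <= #|[set l | x l != 0%R]|)%N by [].
move: {2}#|_| => n; elim: n x => [|n IH] x hx.
  by apply: h1; rewrite /at_most_one_nonzero (leq_trans hx).
case: (leqP #|[set l | x l != 0%R]| 1) => h2; first by apply: h1.
have [i [j [hi hj hij]]] := card_gt1P h2.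
rewrite !inE in hi hj.
set b := upd x j 0%R; set d := upd x i 0%R; set c := upd d j 0%R.
have Hr : is_rect x b c d.
  exists i, j; split => //.
  - by rewrite /b /c /d /upd !ffunE (negbTE hij) eqxx.
  - by rewrite /b /c /d /upd !ffunE eqxx eq_sym (negbTE hij).
  - by move=> l li lj; rewrite /b /c /d /upd !ffunE (negbTE li) (negbTE lj).
have hb : (#|[set l | b l != 0%R]| <= n)%N.
  by rewrite -ltnS (leq_trans (@supp_upd_lt F k _ _ hj)).
have hd : (#|[set l | d l != 0%R]| <= n)%N.
  by rewrite -ltnS (leq_trans (@supp_upd_lt F k _ _ hi)).
have hc : (#|[set l | c l != 0%R]| <= n)%N.
  exact: leq_trans (subset_leq_card (@supp_upd_sub F k _ _)) hd.
have [-> ->] := hR _ _ _ _ Hr.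
by rewrite (IH b hb) (IH c hc) (IH d hd).
Qed.
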